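(* Let $X,Y$ be metrizable spaces with $X$ nonempty. Suppose $X=S\cup D$ where $S,D$ are disjoint dense subsets of $X$, and $Y=P\cup Q$ where $P,Q$ are disjoint dense subsets of $Y$. Let $Z=(S\times P)\cup(D\times Q)\subseteq X\times Y$ with the subspace topology of the product. Then $f\colon Z\to Y$, $f(x,y)=y$, is a continuous open surjection (and hence a quotient map).
   Context: A surjection $f\colon Z\to Y$ is a quotient map if for every $G\subseteq Y$, $G$ is open in $Y$ iff $f^{-1}(G)$ is open in $Z$. *)

(* Defs.v *)
From HB Require Import structures.
From mathcomp Require Import all_boot all_order all_algebra.
From mathcomp Require Import all_classical all_reals all_analysis.
From mathcomp Require Import Rstruct Rstruct_topology.
Set Implicit Arguments. Unset Strict Implicit. Unset Printing Implicit Defensive.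
Import Order.TTheory GRing.Theory Num.Theory.
Local Open Scope classical_set_scope.
Local Open Scope ring_scope.

Definition is_metric (T : Type) (d : T -> T -> Rdefinitions.R) : Prop :=
  [/\ (forall x y, 0 <= d x y),
      (forall x y, d x y = 0 <-> x = y),
      (forall x y, d x y = d y x) &
      (forall x y z, d x z <= d x y + d y z)].

Definition metrizable (T : topologicalType) : Prop :=
  exists d : T -> T -> Rdefinitions.R, is_metric d /\
    forall U : set T, open U <->
      (forall x, U x -> exists2 e : Rdefinitions.R, 0 < e &
         forall y, d x y < e -> U y).

(* Main.v *)
Require Import Defs.
From HB Require Import structures.
From mathcomp Require Import all_boot all_order all_algebra.
From mathcomp Require Import all_classical all_reals all_analysis.
Local Open Scope classical_set_scope.

Lemma snd_cont (X Y : topologicalType) : continuous (@snd X Y).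
Proof. by move=> p; apply: cvg_snd. Qed.

Theorem mainTheorem9 (X Y : topologicalType)
  (S D : set X) (P Q : set Y) :
  metrizable X -> metrizable Y -> [set: X] !=set0 ->
  S `|` D = [set: X] -> S `&` D = set0 -> dense S -> dense D ->
  P `|` Q = [set: Y] -> P `&` Q = set0 -> dense P -> dense Q ->
  let Z : set (X * Y) := (S `*` P) `|` (D `*` Q) in
  [/\ {within Z, continuous (@snd X Y)},
      (forall U : set (subspace Z), U `<=` Z -> open U ->
         open ((@snd X Y) @` U)),
      (@snd X Y) @` Z = [set: Y] &
      (forall G : set Y, open G <->
         open (Z `&` (@snd X Y) @^-1` G : set (subspace Z)))].
Proof.
move=> _ _ [x0 _] _ _ dS dD PQ _ _ _ Z.
have PQy : forall y, P y \/ Q y.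
  by move=> y; have : (P `|` Q) y by rewrite PQ.
have openmap : forall U : set (subspace Z), U `<=` Z -> open U ->
         open ((@snd X Y) @` U).
  move=> U UZ /open_subspaceP [V oV VU].
  rewrite openE => z [[a b] Uab <-]; rewrite /interior.
  have Vab : V (a, b).
    have H : (U `&` Z) (a, b) by split => //; apply: UZ.
    by move: H; rewrite -VU => -[].
  move: oV; rewrite openE => /(_ _ Vab).
  move=> [[P0 Q0] [/= Pa Qb] sub].
  apply: (@filterS _ _ _ Q0) => // q Qq.
  have oi : open P0° by exact: open_interior.
  have ne : P0° !=set0 by exists a; exact: Pa.
  have inU : forall p, P0° p -> Z (p, q) -> U (p, q).
    move=> p Pp Zpq.
    have : (V `&` Z) (p, q).
      split => //; apply: sub; split => //=; exact: interior_subset.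
    by rewrite VU => -[].
  case: (PQy q) => Hq.
  - have [p [Pp Sp]] := dS _ ne oi.
    by exists (p, q) => //; apply: inU => //; left.
  - have [p [Pp Dp]] := dD _ ne oi.
    by exists (p, q) => //; apply: inU => //; right.
have surj : (@snd X Y) @` Z = [set: Y].
  apply/seteqP; split => // y _.
  have ne : [set: X] !=set0 by exists x0.
  case: (PQy y) => Hy.
  - have [s [_ Ss]] := dS _ ne openT.
    by exists (s, y) => //; left.
  - have [s [_ Ss]] := dD _ ne openT.
    by exists (s, y) => //; right.
split => //.
- exact: continuous_subspaceT (@snd_cont X Y).
- move=> G; split => [oG|oG].
  + apply/open_subspaceP; exists ((@snd X Y) @^-1` G).
      by apply: open_comp => // p _; apply: snd_cont.
    rewrite eqEsubset; split => p /=.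
      by move=> [Gp Zp]; split; first split.
    by move=> [[Zp Gp] _]; split.
  + have -> : G = (@snd X Y) @` (Z `&` (@snd X Y) @^-1` G).
      apply/seteqP; split => [y Gy|y [p [_ Gp] <-] //].
      have : ((@snd X Y) @` Z) y by rewrite surj.
      by move=> [p Zp py]; exists p => //; split => //; rewrite /= py.
    by apply: openmap => // p [].
Qed.
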